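(* Let $n,m$ be positive integers, $\Lambda:\mathbb{R}^{n\times n}\to\mathbb{R}^{m\times m}$ linear and $Y\in\mathbb{R}^{m\times m}$. For a real parameter $k\ge1$, call a triple $(\Phi_I,\Phi_V,\Phi_\phi)$ of real symmetric operators on $\mathcal{H}_{A_1}\otimes\mathcal{H}_{B_1}=\mathbb{R}^n\otimes\mathbb{R}^n$ $k$-feasible if \[ \Phi_V=V\Phi_I,\quad \Phi_\phi=\Phi_V^{T_{A_1}},\quad \Phi_I^{T_{A_1}}=\Phi_I,\quad V\Phi_\phi=\Phi_\phi,\quad \Phi_I+\Phi_V\ge0,\quad \Phi_I-\Phi_V\ge0,\quad \Phi_I+\Phi_V+k\Phi_\phi\ge0, \] \[ k^2\operatorname{Tr}(\Phi_I)+k\operatorname{Tr}(\Phi_V)+k\operatorname{Tr}(\Phi_\phi)=1,\qquad (\Lambda_{A_1}\otimes\mathrm{id}_{B_1})(k\Phi_I+\Phi_V+\Phi_\phi)=Y\otimes\operatorname{Tr}_{A_1}(k\Phi_I+\Phi_V+\Phi_\phi). \] If $(\Phi_I,\Phi_V,\Phi_\phi)$ is $k$-feasible with $k\ge1$, then for every real $k'\ge k$ there is a $k'$-feasible triple $(\Phi_I',\Phi_V',\Phi_\phi')$ with $k'^2\Phi_I'+k'\Phi_V'+k'\Phi_\phi'=k^2\Phi_I+k\Phi_V+k\Phi_\phi$.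
   Context: $V$ is the swap operator on $\mathbb{R}^n\otimes\mathbb{R}^n$; $T_{A_1}$ denotes the partial transpose on the first factor; $\operatorname{Tr}_{A_1}$ is the partial trace over the first factor; $\Lambda_{A_1}\otimes\mathrm{id}_{B_1}$ applies $\Lambda$ to the first factor; $\ge0$ means positive semidefinite. (This is the symmetry-reduced second level of the real hierarchy, in which the rank bound $k$ appears as a parameter.) *)

(* Defs.v *)
From HB Require Import structures.
From mathcomp Require Import all_boot all_order all_algebra.
From mathcomp Require Import reals.
Set Implicit Arguments. Unset Strict Implicit. Unset Printing Implicit Defensive.
Import Order.TTheory GRing.Theory Num.Theory.
Local Open Scope ring_scope.

(* Operators on R^p (x) R^q are matrices 'M_(p*q); the product basis vector
   e_a (x) e_b has index [mxvec_index a b] (MathComp's standard encoding). *)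

(* inverse of mxvec_index : decode a product index into a pair *)
Definition idx_pair (p q : nat) (k : 'I_(p * q)) : 'I_p * 'I_q :=
  enum_val (cast_ord (esym (mxvec_cast p q)) k).

Section Tensor.
Variable R : realType.

(* swap operator V on R^n (x) R^n : V (e_a (x) e_b) = e_b (x) e_a *)
Definition swapV (n : nat) : 'M[R]_(n * n) :=
  \matrix_(k, l) (((idx_pair k).1 == (idx_pair l).2)
                  && ((idx_pair k).2 == (idx_pair l).1))%:R.

(* partial transpose on the first factor:
   <a b| X^{T_A} |a' b'> = <a' b| X |a b'> *)
Definition ptA (n : nat) (X : 'M[R]_(n * n)) : 'M[R]_(n * n) :=
  \matrix_(k, l) X (mxvec_index (idx_pair l).1 (idx_pair k).2)
                   (mxvec_index (idx_pair k).1 (idx_pair l).2).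

Definition ptrA (n : nat) (X : 'M[R]_(n * n)) : 'M[R]_n :=
  \matrix_(b, b') \sum_(a < n) X (mxvec_index a b) (mxvec_index a b').

(* (L_{A} (x) id_{B}) X for a map L : M_n -> M_m acting on the first factor *)
Definition applyA (n m : nat) (L : 'M[R]_n -> 'M[R]_m) (X : 'M[R]_(n * n))
  : 'M[R]_(m * n) :=
  \matrix_(k, l)
    L (\matrix_(a, a') X (mxvec_index a (idx_pair k).2)
                         (mxvec_index a' (idx_pair l).2))
      (idx_pair k).1 (idx_pair l).1.

Definition kron (p q : nat) (Y : 'M[R]_p) (T : 'M[R]_q) : 'M[R]_(p * q) :=
  \matrix_(k, l) (Y (idx_pair k).1 (idx_pair l).1 * T (idx_pair k).2 (idx_pair l).2).

Definition psd (p : nat) (A : 'M[R]_p) : Prop :=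
  A^T = A /\ forall v : 'cV[R]_p, 0 <= (v^T *m A *m v) 0 0.

Definition kfeasible (n m : nat) (L : {linear 'M[R]_n -> 'M[R]_m}) (Y : 'M[R]_m)
  (k : R) (PI PV Pphi : 'M[R]_(n * n)) : Prop :=
  [/\ PI^T = PI, PV^T = PV & Pphi^T = Pphi] /\
  [/\ PV = swapV n *m PI, Pphi = ptA PV, ptA PI = PI & swapV n *m Pphi = Pphi] /\
  [/\ psd (PI + PV), psd (PI - PV), psd (PI + PV + k *: Pphi),
       k ^+ 2 * \tr PI + k * \tr PV + k * \tr Pphi = 1 &
       applyA L (k *: PI + PV + Pphi) = kron Y (ptrA (k *: PI + PV + Pphi))].

End Tensor.

(* Main.v *)
Require Import Defs.
From HB Require Import structures.
From mathcomp Require Import all_boot all_order all_algebra.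
From mathcomp Require Import reals.
From mathcomp Require Import ring lra.
Import Order.TTheory GRing.Theory Num.Theory.
Local Open Scope ring_scope.

Lemma idx_pairK p q (a : 'I_p) (b : 'I_q) : idx_pair (mxvec_index a b) = (a, b).
Proof. by rewrite /idx_pair /mxvec_index cast_ordK enum_rankK. Qed.

Lemma idx_pairE p q (k : 'I_(p * q)) :
  mxvec_index (idx_pair k).1 (idx_pair k).2 = k.
Proof. by case/mxvec_indexP: k => a b; rewrite idx_pairK. Qed.

Section H.
Variable R : realType.

Lemma swapV_mulE n (X : 'M[R]_(n * n)) k l :
  (swapV R n *m X) k l = X (mxvec_index (idx_pair k).2 (idx_pair k).1) l.
Proof.
rewrite mxE (bigD1 (mxvec_index (idx_pair k).2 (idx_pair k).1)) //=.
rewrite big1 ?addr0.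
  by rewrite mxE idx_pairK /= !eqxx /= mul1r.
move=> j /negP Hj; rewrite mxE.
case: eqP => [E1|]; case: eqP => [E2|] //=; rewrite ?mul0r //.
exfalso; apply: Hj; apply/eqP.
by rewrite E1 E2 idx_pairE.
Qed.

Lemma swapV_inv n (X : 'M[R]_(n * n)) : swapV R n *m (swapV R n *m X) = X.
Proof.
apply/matrixP => k l; rewrite swapV_mulE swapV_mulE idx_pairK /=.
by rewrite idx_pairE.
Qed.

Lemma ptA_inv n (X : 'M[R]_(n * n)) : ptA (ptA X) = X.
Proof.
apply/matrixP => k l; rewrite !mxE !idx_pairK /= !idx_pairE //.
Qed.

Lemma ptA_lin n (a b : R) (X Y : 'M[R]_(n * n)) :
  ptA (a *: X + b *: Y) = a *: ptA X + b *: ptA Y.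
Proof. by apply/matrixP => k l; rewrite !mxE. Qed.

Lemma ptAD n (X Y : 'M[R]_(n * n)) : ptA (X + Y) = ptA X + ptA Y.
Proof. by apply/matrixP => k l; rewrite !mxE. Qed.

Lemma ptAZ n (a : R) (X : 'M[R]_(n * n)) : ptA (a *: X) = a *: ptA X.
Proof. by apply/matrixP => k l; rewrite !mxE. Qed.

Lemma ptrA_scale n (a : R) (X : 'M[R]_(n * n)) : ptrA (a *: X) = a *: ptrA X.
Proof.
apply/matrixP => k l; rewrite !mxE mulr_sumr; apply: eq_bigr => i _.
by rewrite mxE.
Qed.

Lemma kron_scale p q (a : R) (Y : 'M[R]_p) (T : 'M[R]_q) :
  kron Y (a *: T) = a *: kron Y T.
Proof. by apply/matrixP => k l; rewrite !mxE mulrCA. Qed.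

Lemma applyA_scale n m (L : {linear 'M[R]_n -> 'M[R]_m}) (a : R) (X : 'M[R]_(n * n)) :
  applyA L (a *: X) = a *: applyA L X.
Proof.
apply/matrixP => k l; rewrite !mxE.
set M1 := (X in L X).
have -> : M1 = a *: (\matrix_(a0, a') X (mxvec_index a0 (idx_pair k).2)
                         (mxvec_index a' (idx_pair l).2)).
  by apply/matrixP => i j; rewrite !mxE.
by rewrite linearZ /= mxE.
Qed.

Lemma psd_comb p (a b : R) (A B : 'M[R]_p) :
  0 <= a -> 0 <= b -> psd A -> psd B -> psd (a *: A + b *: B).
Proof.
move=> ha hb [hA qA] [hB qB]; split.
  by rewrite linearD !linearZ /= hA hB.
move=> v.
have := qA v; have := qB v; rewrite mulmxDr mulmxDl -!scalemxAr -!scalemxAl.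
move=> h1 h2; rewrite [X in _ <= X]mxE [X in _ <= X + _]mxE [X in _ <= _ + X]mxE.
by apply: addr_ge0; apply: mulr_ge0.
Qed.

End H.

Theorem mainTheorem13 (R : realType) (n m : nat) (hn : (0 < n)%N) (hm : (0 < m)%N)
  (L : {linear 'M[R]_n -> 'M[R]_m}) (Y : 'M[R]_m) (k : R)
  (PI PV Pphi : 'M[R]_(n * n)) :
  1 <= k -> kfeasible L Y k PI PV Pphi ->
  forall k' : R, k <= k' ->
  exists PI' PV' Pphi' : 'M[R]_(n * n),
    kfeasible L Y k' PI' PV' Pphi' /\
    k' ^+ 2 *: PI' + k' *: PV' + k' *: Pphi' = k ^+ 2 *: PI + k *: PV + k *: Pphi.
Proof.
move=> hk1 hF k' hkk'.
have [->|hne] := eqVneq k' k.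
  by exists PI, PV, Pphi.
have hlt : k < k' by rewrite lt_neqAle eq_sym hne.
case: hF => [[tI tV tP] [[eV eP eI eS] [p1 p2 p3 htr hap]]].
set D := (k' - 1) * (k' + 2).
have k0 : k' != 0 by apply/eqP => h; lra.
have k1 : k' - 1 != 0 by apply/eqP => h; lra.
have k2 : k' + 2 != 0 by apply/eqP => h; lra.
have kk0 : k != 0 by apply/eqP => h; lra.
have D0 : D != 0 by rewrite mulf_neq0.
set al := k * (k * (k' + 1) - 2) / (k' * D).
set be := k * (k' - k) / (k' * D).
have E1 : k' ^+ 2 * al + 2 * k' * be = k ^+ 2.
  rewrite /al /be /D; by field; rewrite ?k0 ?k1 ?k2 ?kk0.
have E2 : k' ^+ 2 * be + k' * al + k' * be = k.
  rewrite /al /be /D; by field; rewrite ?k0 ?k1 ?k2 ?kk0.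
have cpos : 0 < k / (k' * D).
  by rewrite divr_gt0 // ?mulr_gt0 /D ?mulr_gt0; lra.
have alE : al = k / (k' * D) * (k * (k' + 1) - 2) by rewrite /al mulrAC.
have beE : be = k / (k' * D) * (k' - k) by rewrite /be mulrAC.
have ab : 0 <= al - be.
  rewrite alE beE -mulrBr mulr_ge0 //; [exact: ltW|nra].
have b0 : 0 <= be by rewrite beE mulr_ge0 //; [exact: ltW|lra].
have VV : swapV R n *m PV = PI by rewrite eV swapV_inv.
have tpV : ptA Pphi = PV by rewrite eP ptA_inv.
exists (al *: PI + be *: (PV + Pphi)).
exists (al *: PV + be *: (PI + Pphi)).
exists (al *: Pphi + be *: (PI + PV)).
split; last first.
  apply/matrixP => i j; rewrite !mxE.
  transitivity ((k' ^+ 2 * al + 2 * k' * be) * PI i j +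
                (k' ^+ 2 * be + k' * al + k' * be) * (PV i j + Pphi i j)).
    ring.
  by rewrite E1 E2; ring.
split.
  by split; rewrite !linearD !linearZ /= ?linearD /= ?tI ?tV ?tP.
split.
  split.
  - by rewrite mulmxDr -!scalemxAr mulmxDr -eV VV eS.
  - by rewrite ptAD !ptAZ ptAD -eP eI tpV.
  - by rewrite ptAD !ptAZ ptAD eI tpV -eP [Pphi + PV]addrC.
  - by rewrite mulmxDr -!scalemxAr mulmxDr -eV VV eS [PV + PI]addrC.
split.
- have -> : al *: PI + be *: (PV + Pphi) + (al *: PV + be *: (PI + Pphi)) =
     (al + be - 2 * be / k) *: (PI + PV) + (2 * be / k) *: (PI + PV + k *: Pphi).
    by apply/matrixP => i j; rewrite !mxE; field.
  apply: psd_comb => //.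
  + have : 0 <= be / k by rewrite divr_ge0 //; lra.
    have : be / k <= be by rewrite ler_pdivrMr; nra.
    rewrite -mulrA; lra.
  + by rewrite -mulrA mulr_ge0 // divr_ge0 //; lra.
- have -> : al *: PI + be *: (PV + Pphi) - (al *: PV + be *: (PI + Pphi)) =
     (al - be) *: (PI - PV) + 0 *: (PI - PV).
    by apply/matrixP => i j; rewrite !mxE; ring.
  by apply: psd_comb.
- have -> : al *: PI + be *: (PV + Pphi) + (al *: PV + be *: (PI + Pphi)) +
      k' *: (al *: Pphi + be *: (PI + PV)) =
     0 *: (PI + PV) + ((2 * be + k' * al) / k) *: (PI + PV + k *: Pphi).
    apply/matrixP => i j; rewrite !mxE.
    have Hc : al + be + k' * be = (2 * be + k' * al) / k.
      rewrite /al /be /D; by field; rewrite ?k0 ?k1 ?k2 ?kk0.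
    transitivity ((al + be + k' * be) * (PI i j + PV i j) +
                  (2 * be + k' * al) * Pphi i j); first ring.
    by rewrite Hc; field.
  apply: psd_comb => //.
  apply: divr_ge0; last lra.
  by apply: addr_ge0; [lra| apply: mulr_ge0; lra].
- rewrite !mxtraceD !mxtraceZ !mxtraceD -htr.
  transitivity ((k' ^+ 2 * al + 2 * k' * be) * \tr PI +
                (k' ^+ 2 * be + k' * al + k' * be) * (\tr PV + \tr Pphi)).
    ring.
  by rewrite E1 E2; ring.
- have -> : k' *: (al *: PI + be *: (PV + Pphi)) + (al *: PV + be *: (PI + Pphi)) +
      (al *: Pphi + be *: (PI + PV)) = (k / k') *: (k *: PI + PV + Pphi).
    apply/matrixP => i j; rewrite !mxE.
    have F1 : k' * al + 2 * be = k / k' * k.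
      rewrite /al /be /D; by field; rewrite ?k0 ?k1 ?k2 ?kk0.
    have F2 : k' * be + al + be = k / k'.
      rewrite /al /be /D; by field; rewrite ?k0 ?k1 ?k2 ?kk0.
    transitivity ((k' * al + 2 * be) * PI i j + (k' * be + al + be) * (PV i j + Pphi i j)).
      ring.
    by rewrite F1 F2; ring.
  by rewrite applyA_scale ptrA_scale kron_scale hap.
Qed.
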